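(* Let $A$ be the $N\times N$ extended Cartan matrix of one of the affine extensions $A_4^=$, $D_6^>$, $D_6^=$, $D_6^<$, $E_8^=$ (so $N=5,7,7,7,9$). Let $B=\begin{pmatrix}2&v^T\\ w&A\end{pmatrix}$ be an $(N+1)\times(N+1)$ matrix with $v,w\in\mathbb{Z}^N$ such that $v_i\le 0$ and $w_i\le0$ for all $i$, $v_i=0$ if and only if $w_i=0$, and $\det B=0$ (i.e. $B$ is a Kac–Moody-type affine extension of $A$ by one further node). Then $v=w=0$, i.e. the additional node is disconnected from the diagram.
   Context: The Cartan matrix of a simply-laced Dynkin diagram has diagonal entries $2$, entry $-1$ for joined nodes and $0$ otherwise. The extended Cartan matrices are (indices $0,\dots,n$): $A_4^=$: simply-laced cycle $0-1-2-3-4-0$. $D_6^=$: simply-laced diagram with chain $1-2-3-4-5$, node $6$ joined to $4$, node $0$ joined to $2$. $D_6^<$: the $D_6$ part (chain $1-2-3-4-5$, node $6$ joined to $4$, simply laced) together with node $0$ where $A_{01}=-2$, $A_{10}=-1$ and $A_{0j}=A_{j0}=0$ for $j\ge2$. $D_6^>$: same as $D_6^<$ but with $A_{01}=-1$, $A_{10}=-2$. $E_8^=$: simply-laced diagram with chain $0-1-2-3-4-5-6-7$ and node $8$ joined to node $5$. *)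

(* Defs.v *)
From mathcomp Require Import all_boot all_order all_algebra.
Set Implicit Arguments. Unset Strict Implicit. Unset Printing Implicit Defensive.
Import Order.TTheory GRing.Theory Num.Theory.
Local Open Scope ring_scope.

Definition simply_laced (n : nat) (adj : nat -> nat -> bool) : 'M[int]_n :=
  \matrix_(i < n, j < n)
    (if (i : nat) == (j : nat) then 2
     else if adj i j || adj j i then -1 else 0).

(* A_4^= : cycle 0-1-2-3-4-0 *)
Definition adjA4 (i j : nat) : bool := (j == i.+1)%N || ((i == 0) && (j == 4))%N.
(* D_6 part: chain 1-2-3-4-5, node 6 joined to 4 *)
Definition adjD6 (i j : nat) : bool :=
  [&& 1 <= i, i <= 4 & j == i.+1]%N || ((i == 4) && (j == 6))%N.
Definition adjD6eq (i j : nat) : bool := adjD6 i j || ((i == 0) && (j == 2))%N.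
(* E_8^= : chain 0-1-...-7, node 8 joined to 5 *)
Definition adjE8 (i j : nat) : bool :=
  ((i <= 6) && (j == i.+1))%N || ((i == 5) && (j == 8))%N.

Definition cartan_A4eq : 'M[int]_5 := simply_laced 5 adjA4.
Definition cartan_D6eq : 'M[int]_7 := simply_laced 7 adjD6eq.
Definition cartan_D6lt : 'M[int]_7 :=
  \matrix_(i < 7, j < 7)
    (if ((i : nat) == 0)%N && ((j : nat) == 1)%N then -2
     else if ((i : nat) == 1)%N && ((j : nat) == 0)%N then -1
     else simply_laced 7 adjD6 i j).
Definition cartan_D6gt : 'M[int]_7 :=
  \matrix_(i < 7, j < 7)
    (if ((i : nat) == 0)%N && ((j : nat) == 1)%N then -1
     else if ((i : nat) == 1)%N && ((j : nat) == 0)%N then -2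
     else simply_laced 7 adjD6 i j).
Definition cartan_E8eq : 'M[int]_9 := simply_laced 9 adjE8.

Inductive affine_ext := A4eq | D6gt | D6eq | D6lt | E8eq.

Definition ext_dim (t : affine_ext) : nat :=
  match t with A4eq => 5 | D6gt | D6eq | D6lt => 7 | E8eq => 9 end.

Definition ext_cartan (t : affine_ext) : 'M[int]_(ext_dim t) :=
  match t with
  | A4eq => cartan_A4eq | D6gt => cartan_D6gt | D6eq => cartan_D6eq
  | D6lt => cartan_D6lt | E8eq => cartan_E8eq
  end.

Definition ext_matrix (N : nat) (A : 'M[int]_N) (v w : 'cV[int]_N) : 'M[int]_(1 + N) :=
  block_mx (2%:M : 'M[int]_1) v^T w A.

(* Main.v *)
Require Import Defs.
From mathcomp Require Import all_boot all_order all_algebra.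
From mathcomp Require Import ring lra zify.
Import Order.TTheory GRing.Theory Num.Theory.
Local Open Scope ring_scope.


Lemma B00 (N : nat) (A : 'M[int]_N.+1) (v w : 'cV[int]_N.+1)  : (ext_matrix A v w) ord0 ord0 = 2.
Proof.
have -> : (ord0 : 'I_(1 + N.+1)) = lshift N.+1 (ord0 : 'I_1) by apply/val_inj.
by rewrite /ext_matrix block_mxEul mxE.
Qed.
Lemma Bll (N : nat) (A : 'M[int]_N.+1) (v w : 'cV[int]_N.+1) i j : (ext_matrix A v w) (lift ord0 i) (lift ord0 j) = A i j.
Proof.
have -> : lift ord0 i = rshift 1 i :> 'I_(1 + N.+1) by apply/val_inj.
have -> : lift ord0 j = rshift 1 j :> 'I_(1 + N.+1) by apply/val_inj.
by rewrite /ext_matrix block_mxEdr.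
Qed.
Lemma B0l (N : nat) (A : 'M[int]_N.+1) (v w : 'cV[int]_N.+1) j : (ext_matrix A v w) ord0 (lift ord0 j) = v j 0.
Proof.
have -> : lift ord0 j = rshift 1 j :> 'I_(1 + N.+1) by apply/val_inj.
have -> : (ord0 : 'I_(1 + N.+1)) = lshift N.+1 (ord0 : 'I_1) by apply/val_inj.
by rewrite /ext_matrix block_mxEur mxE.
Qed.
Lemma Bl0 (N : nat) (A : 'M[int]_N.+1) (v w : 'cV[int]_N.+1) i : (ext_matrix A v w) (lift ord0 i) ord0 = w i 0.
Proof.
have -> : lift ord0 i = rshift 1 i :> 'I_(1 + N.+1) by apply/val_inj.
have -> : (ord0 : 'I_(1 + N.+1)) = lshift N.+1 (ord0 : 'I_1) by apply/val_inj.
by rewrite /ext_matrix block_mxEdl.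
Qed.

Lemma det_ext (N : nat) (A : 'M[int]_N.+1) (v w : 'cV[int]_N.+1)  : \det (ext_matrix A v w) = 2 * \det A - \sum_k \sum_i v k 0 * w i 0 * \adj A k i.
Proof.
rewrite (expand_det_row _ ord0) big_ord_recl B00.
have -> : cofactor (ext_matrix A v w) ord0 ord0 = \det A.
  rewrite /cofactor expr0 mul1r; congr (\det _); apply/matrixP => a b.
  by rewrite 2!mxE Bll.
rewrite -sumrN; congr (_ + _); apply: eq_bigr => k _.
rewrite B0l /cofactor.
set M := row' _ _.
rewrite (expand_det_col M ord0) !mulr_sumr -sumrN; apply: eq_bigr => i _.
have -> : M i ord0 = w i 0.
  rewrite /M 2!mxE.
  have -> : lift (lift ord0 k) (ord0 : 'I_N.+1) = ord0 by apply/val_inj.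
  by rewrite Bl0.
rewrite [cofactor M i ord0]/cofactor.
have -> : row' i (col' ord0 M) = row' i (col' k A).
  apply/matrixP => a b; rewrite /M 4!mxE.
  have -> : lift (lift ord0 k) (lift ord0 b) = lift ord0 (lift k b).
    by apply/val_inj; rewrite /= /bump /= !add1n ltnS addnS.
  by rewrite Bll !mxE.
rewrite mxE /cofactor /= add0n addn0 exprS exprD.
ring.
Qed.

Lemma adj_rank1 {N} (A : 'M[int]_N.+1) (d d' : 'cV[int]_N.+1) :
  d 0 0 != 0 -> A *m d = 0 ->
  (forall x, A *m x = 0 -> d 0 0 *: x = x 0 0 *: d) ->
  (forall x, A^T *m x = 0 -> d' 0 0 *: x = x 0 0 *: d') ->
  \det A = 0 /\
  forall k i, d 0 0 * d' 0 0 * \adj A k i = \adj A 0 0 * d k 0 * d' i 0.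
Proof.
move=> d0 Ad kerA kerAT.
have dA : \det A = 0.
  have := congr1 (fun M => (\adj A *m M) 0 0) Ad.
  rewrite /= mulmxA mul_adj_mx mulmx0 mul_scalar_mx mxE => /eqP; rewrite mxE.
  by rewrite mulf_eq0 (negPf d0) orbF => /eqP.
split=> // k i.
have col_i : forall k, d 0 0 * \adj A k i = \adj A 0 i * d k 0.
  move=> k'; have := kerA (col i (\adj A)).
  have -> : A *m col i (\adj A) = 0.
    by rewrite colE mulmxA mul_mx_adj dA mul_scalar_mx scale0r.
  move=> /(_ erefl).
  by move/(congr1 (fun M : 'cV[int]_N.+1 => M k' 0)); rewrite !mxE.
have row_k : forall k, d' 0 0 * \adj A k i = \adj A k 0 * d' i 0.
  move=> k'; have := kerAT (row k' (\adj A))^T.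
  have -> : A^T *m (row k' (\adj A))^T = 0.
    by rewrite -trmx_mul rowE -mulmxA mul_adj_mx dA mul_mx_scalar scale0r trmx0.
  move=> /(_ erefl).
  by move/(congr1 (fun M : 'cV[int]_N.+1 => M i 0)); rewrite !mxE.
have h1 := col_i k; have h2 := row_k 0; have h3 := row_k k.
have e : d 0 0 * d' 0 0 * \adj A k i = d 0 0 * \adj A k i * d' 0 0 by ring.
rewrite e h1.
have e2 : \adj A 0 i * d k 0 * d' 0 0 = (d' 0 0 * \adj A 0 i) * d k 0 by ring.
rewrite e2 h2; ring.
Qed.

Lemma sum_neg0 n (a d : 'cV[int]_n) : (forall i, a i 0 <= 0) -> (forall i, 0 < d i 0) ->
  \sum_i a i 0 * d i 0 = 0 -> forall i, a i 0 = 0.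
Proof.
move=> ha hd s0 i.
have h := @psumr_eq0P _ _ xpredT (fun i => - (a i 0 * d i 0)).
have : - (a i 0 * d i 0) = 0.
  apply: h => //; last by rewrite sumrN s0 oppr0.
  by move=> j _; rewrite oppr_ge0 pmulr_lle0 ?hd ?ha.
move/eqP; rewrite oppr_eq0 mulf_eq0 => /orP[/eqP //|].
by rewrite (gt_eqF (hd i)).
Qed.

Lemma main_gen N (A : 'M[int]_N.+1) (d d' : 'cV[int]_N.+1) (v w : 'cV[int]_N.+1) :
  (forall i, 0 < d i 0) -> (forall i, 0 < d' i 0) -> A *m d = 0 ->
  (forall x, A *m x = 0 -> d 0 0 *: x = x 0 0 *: d) ->
  (forall x, A^T *m x = 0 -> d' 0 0 *: x = x 0 0 *: d') ->
  \adj A 0 0 != 0 ->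
  (forall i, v i 0 <= 0) ->
  (forall i, w i 0 <= 0) ->
  (forall i, (v i 0 == 0) = (w i 0 == 0)) ->
  \det (ext_matrix A v w) = 0 ->
  v = 0 /\ w = 0.
Proof.
move=> dp d'p Ad kerA kerAT adj0 hv hw hvw dB.
have [dA adjE] := @adj_rank1 _ A d d' (lt0r_neq0 (dp 0)) Ad kerA kerAT.
have S0 : \sum_k \sum_i v k 0 * w i 0 * \adj A k i = 0.
  by move: dB; rewrite det_ext dA mulr0 sub0r => /eqP; rewrite oppr_eq0 => /eqP.
have P0 : \adj A 0 0 * (\sum_k v k 0 * d k 0) * (\sum_i w i 0 * d' i 0) = 0.
  transitivity (d 0 0 * d' 0 0 * \sum_k \sum_i v k 0 * w i 0 * \adj A k i); last by rewrite S0 mulr0.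
  rewrite -mulrA mulr_suml mulr_sumr [RHS]mulr_sumr; apply: eq_bigr => k _.
  rewrite mulrA !mulr_sumr; apply: eq_bigr => i _.
  transitivity (v k 0 * w i 0 * (d 0 0 * d' 0 0 * \adj A k i)); last by ring.
  rewrite adjE; ring.
have allv : (forall i, v i 0 = 0) -> v = 0 /\ w = 0.
  move=> h; split; apply/matrixP => i j; rewrite (ord1 j) mxE //.
  by apply/eqP; rewrite -hvw h.
move/eqP: P0; rewrite !mulf_eq0 (negPf adj0) /= => /orP[]/eqP h.
  exact: (allv (@sum_neg0 _ _ _ hv dp h)).
apply: allv => i; apply/eqP; rewrite hvw; apply/eqP.
by apply: (@sum_neg0 _ _ _ hw d'p h).
Qed.

Lemma mul_col_nat n (c : 'M[int]_n.+1) (x : 'cV[int]_n.+1) (i : 'I_n.+1) :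
 (c *m x) i 0 = \sum_(0 <= j < n.+1) c i (inord j) * x (inord j) 0.
Proof. by rewrite mxE big_mkord; apply: eq_bigr => j _; rewrite inord_val. Qed.

Lemma mul_row_nat n m (y : 'rV[int]_n.+1) (M : 'M[int]_(n.+1, m)) k :
 (y *m M) ord0 k = \sum_(0 <= j < n.+1) y ord0 (inord j) * M (inord j) k.
Proof. by rewrite mxE big_mkord; apply: eq_bigr => j _; rewrite inord_val. Qed.

Lemma forall_ord n (P : 'I_n.+1 -> Prop) :
  (forall k, (k < n.+1)%N -> P (inord k)) -> forall i, P i.
Proof. by move=> h i; rewrite -(inord_val i); apply: h. Qed.

Lemma det0_int n (M : 'M[int]_n) : \det M = 0 ->
  exists2 y : 'rV[int]_n, y != 0 & y *m M = 0.
Proof. by move/eqP/det0P. Qed.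

Ltac simp_sum e :=
  do 9 try (rewrite big_ltn in e; last done); rewrite big_geq // in e;
  rewrite ?mxE /= ?inordK // /= in e.

Ltac getq h n k e :=
  have e := congr1 (fun M : 'cV[int]_n => M (inord k) 0) h;
  rewrite mul_col_nat mxE in e; simp_sum e.

Ltac getqr h n k e :=
  have e := congr1 (fun M : 'rV[int]_n => M ord0 (inord k)) h;
  rewrite mul_row_nat mxE in e; simp_sum e.

Definition dA4 : 'cV[int]_5 := \col_(i < 5) (nth 0 [:: 1; 1; 1; 1; 1] i).

Ltac simp_goal :=
  do 9 try (rewrite big_ltn; last done); rewrite big_geq // ?mxE /= ?inordK // /=.


Definition d_cartan_A4eq : 'cV[int]_5 := \col_(i < 5) (nth 0 [:: 1; 1; 1; 1; 1] i).
Definition d'_cartan_A4eq : 'cV[int]_5 := \col_(i < 5) (nth 0 [:: 1; 1; 1; 1; 1] i).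

Lemma cartan_A4eq_pos : forall i, 0 < d_cartan_A4eq i 0.
Proof. apply: forall_ord => k hk; rewrite mxE inordK //; case: k hk => [|[|[|[|[|k]]]]] hk; by [] || lia. Qed.
Lemma cartan_A4eq_pos' : forall i, 0 < d'_cartan_A4eq i 0.
Proof. apply: forall_ord => k hk; rewrite mxE inordK //; case: k hk => [|[|[|[|[|k]]]]] hk; by [] || lia. Qed.

Lemma cartan_A4eq_d : cartan_A4eq *m d_cartan_A4eq = 0.
Proof.
apply/matrixP => i j; rewrite (ord1 j); move: i; apply: forall_ord => k hk.
rewrite mul_col_nat [RHS]mxE /cartan_A4eq /simply_laced /d_cartan_A4eq.
case: k hk => [|[|[|[|[|k]]]]] hk; try (simp_goal; done); lia.
Qed.

Lemma cartan_A4eq_ker x : cartan_A4eq *m x = 0 -> d_cartan_A4eq 0 0 *: x = x 0 0 *: d_cartan_A4eq.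
Proof.
move=> h; rewrite /cartan_A4eq /simply_laced in h.
getq h 5%N 0%N e0.
getq h 5%N 1%N e1.
getq h 5%N 2%N e2.
getq h 5%N 3%N e3.
getq h 5%N 4%N e4.
have z : (0 : 'I_5) = inord 0 by apply: ord_inj; rewrite inordK.
apply/matrixP => i j; rewrite (ord1 j); move: i; apply: forall_ord => k hk.
rewrite /d_cartan_A4eq !mxE z !inordK //.
case: k hk => [|[|[|[|[|k]]]]] hk; rewrite /=; lia.
Qed.

Lemma cartan_A4eq_kerT x : cartan_A4eq^T *m x = 0 -> d'_cartan_A4eq 0 0 *: x = x 0 0 *: d'_cartan_A4eq.
Proof.
move=> h; rewrite /cartan_A4eq /simply_laced in h.
getq h 5%N 0%N e0.
getq h 5%N 1%N e1.
getq h 5%N 2%N e2.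
getq h 5%N 3%N e3.
getq h 5%N 4%N e4.
have z : (0 : 'I_5) = inord 0 by apply: ord_inj; rewrite inordK.
apply/matrixP => i j; rewrite (ord1 j); move: i; apply: forall_ord => k hk.
rewrite /d'_cartan_A4eq !mxE z !inordK //.
case: k hk => [|[|[|[|[|k]]]]] hk; rewrite /=; lia.
Qed.

Lemma cartan_A4eq_adj : \adj cartan_A4eq 0 0 != 0.
Proof.
rewrite mxE /cofactor /= expr0 mul1r.
apply/negP => /eqP /det0_int [y ynz h].
rewrite /cartan_A4eq /simply_laced in h.
getqr h 4%N 0%N e0.
getqr h 4%N 1%N e1.
getqr h 4%N 2%N e2.
getqr h 4%N 3%N e3.
apply: (negP ynz); apply/eqP/matrixP => i j; rewrite [i](_ : _ = ord0); last exact: ord1.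
rewrite [RHS]mxE; move: j.
apply: forall_ord => k hk.
case: k hk => [|[|[|[|k]]]] hk; match goal with |- fun_of_matrix ?M ?i ?j = _ => change (@fun_of_matrix int _ _ M i j = 0 :> int) end; lia.
Qed.

Lemma cartan_A4eq_main (v w : 'cV[int]_5) :
  (forall i, v i 0 <= 0) ->
  (forall i, w i 0 <= 0) ->
  (forall i, (v i 0 == 0) = (w i 0 == 0)) ->
  \det (ext_matrix cartan_A4eq v w) = 0 ->
  v = 0 /\ w = 0.
Proof. exact: (@main_gen _ cartan_A4eq d_cartan_A4eq d'_cartan_A4eq v w cartan_A4eq_pos cartan_A4eq_pos' cartan_A4eq_d cartan_A4eq_ker cartan_A4eq_kerT cartan_A4eq_adj). Qed.

Definition d_cartan_D6eq : 'cV[int]_7 := \col_(i < 7) (nth 0 [:: 1; 1; 2; 2; 2; 1; 1] i).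
Definition d'_cartan_D6eq : 'cV[int]_7 := \col_(i < 7) (nth 0 [:: 1; 1; 2; 2; 2; 1; 1] i).

Lemma cartan_D6eq_pos : forall i, 0 < d_cartan_D6eq i 0.
Proof. apply: forall_ord => k hk; rewrite mxE inordK //; case: k hk => [|[|[|[|[|[|[|k]]]]]]] hk; by [] || lia. Qed.
Lemma cartan_D6eq_pos' : forall i, 0 < d'_cartan_D6eq i 0.
Proof. apply: forall_ord => k hk; rewrite mxE inordK //; case: k hk => [|[|[|[|[|[|[|k]]]]]]] hk; by [] || lia. Qed.

Lemma cartan_D6eq_d : cartan_D6eq *m d_cartan_D6eq = 0.
Proof.
apply/matrixP => i j; rewrite (ord1 j); move: i; apply: forall_ord => k hk.
rewrite mul_col_nat [RHS]mxE /cartan_D6eq /simply_laced /d_cartan_D6eq.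
case: k hk => [|[|[|[|[|[|[|k]]]]]]] hk; try (simp_goal; done); lia.
Qed.

Lemma cartan_D6eq_ker x : cartan_D6eq *m x = 0 -> d_cartan_D6eq 0 0 *: x = x 0 0 *: d_cartan_D6eq.
Proof.
move=> h; rewrite /cartan_D6eq /simply_laced in h.
getq h 7%N 0%N e0.
getq h 7%N 1%N e1.
getq h 7%N 2%N e2.
getq h 7%N 3%N e3.
getq h 7%N 4%N e4.
getq h 7%N 5%N e5.
getq h 7%N 6%N e6.
have z : (0 : 'I_7) = inord 0 by apply: ord_inj; rewrite inordK.
apply/matrixP => i j; rewrite (ord1 j); move: i; apply: forall_ord => k hk.
rewrite /d_cartan_D6eq !mxE z !inordK //.
case: k hk => [|[|[|[|[|[|[|k]]]]]]] hk; rewrite /=; lia.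
Qed.

Lemma cartan_D6eq_kerT x : cartan_D6eq^T *m x = 0 -> d'_cartan_D6eq 0 0 *: x = x 0 0 *: d'_cartan_D6eq.
Proof.
move=> h; rewrite /cartan_D6eq /simply_laced in h.
getq h 7%N 0%N e0.
getq h 7%N 1%N e1.
getq h 7%N 2%N e2.
getq h 7%N 3%N e3.
getq h 7%N 4%N e4.
getq h 7%N 5%N e5.
getq h 7%N 6%N e6.
have z : (0 : 'I_7) = inord 0 by apply: ord_inj; rewrite inordK.
apply/matrixP => i j; rewrite (ord1 j); move: i; apply: forall_ord => k hk.
rewrite /d'_cartan_D6eq !mxE z !inordK //.
case: k hk => [|[|[|[|[|[|[|k]]]]]]] hk; rewrite /=; lia.
Qed.

Lemma cartan_D6eq_adj : \adj cartan_D6eq 0 0 != 0.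
Proof.
rewrite mxE /cofactor /= expr0 mul1r.
apply/negP => /eqP /det0_int [y ynz h].
rewrite /cartan_D6eq /simply_laced in h.
getqr h 6%N 0%N e0.
getqr h 6%N 1%N e1.
getqr h 6%N 2%N e2.
getqr h 6%N 3%N e3.
getqr h 6%N 4%N e4.
getqr h 6%N 5%N e5.
apply: (negP ynz); apply/eqP/matrixP => i j; rewrite [i](_ : _ = ord0); last exact: ord1.
rewrite [RHS]mxE; move: j.
apply: forall_ord => k hk.
case: k hk => [|[|[|[|[|[|k]]]]]] hk; match goal with |- fun_of_matrix ?M ?i ?j = _ => change (@fun_of_matrix int _ _ M i j = 0 :> int) end; lia.
Qed.

Lemma cartan_D6eq_main (v w : 'cV[int]_7) :
  (forall i, v i 0 <= 0) ->
  (forall i, w i 0 <= 0) ->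
  (forall i, (v i 0 == 0) = (w i 0 == 0)) ->
  \det (ext_matrix cartan_D6eq v w) = 0 ->
  v = 0 /\ w = 0.
Proof. exact: (@main_gen _ cartan_D6eq d_cartan_D6eq d'_cartan_D6eq v w cartan_D6eq_pos cartan_D6eq_pos' cartan_D6eq_d cartan_D6eq_ker cartan_D6eq_kerT cartan_D6eq_adj). Qed.

Definition d_cartan_D6lt : 'cV[int]_7 := \col_(i < 7) (nth 0 [:: 2; 2; 2; 2; 2; 1; 1] i).
Definition d'_cartan_D6lt : 'cV[int]_7 := \col_(i < 7) (nth 0 [:: 1; 2; 2; 2; 2; 1; 1] i).

Lemma cartan_D6lt_pos : forall i, 0 < d_cartan_D6lt i 0.
Proof. apply: forall_ord => k hk; rewrite mxE inordK //; case: k hk => [|[|[|[|[|[|[|k]]]]]]] hk; by [] || lia. Qed.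
Lemma cartan_D6lt_pos' : forall i, 0 < d'_cartan_D6lt i 0.
Proof. apply: forall_ord => k hk; rewrite mxE inordK //; case: k hk => [|[|[|[|[|[|[|k]]]]]]] hk; by [] || lia. Qed.

Lemma cartan_D6lt_d : cartan_D6lt *m d_cartan_D6lt = 0.
Proof.
apply/matrixP => i j; rewrite (ord1 j); move: i; apply: forall_ord => k hk.
rewrite mul_col_nat [RHS]mxE /cartan_D6lt /simply_laced /d_cartan_D6lt.
case: k hk => [|[|[|[|[|[|[|k]]]]]]] hk; try (simp_goal; done); lia.
Qed.

Lemma cartan_D6lt_ker x : cartan_D6lt *m x = 0 -> d_cartan_D6lt 0 0 *: x = x 0 0 *: d_cartan_D6lt.
Proof.
move=> h; rewrite /cartan_D6lt /simply_laced in h.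
getq h 7%N 0%N e0.
getq h 7%N 1%N e1.
getq h 7%N 2%N e2.
getq h 7%N 3%N e3.
getq h 7%N 4%N e4.
getq h 7%N 5%N e5.
getq h 7%N 6%N e6.
have z : (0 : 'I_7) = inord 0 by apply: ord_inj; rewrite inordK.
apply/matrixP => i j; rewrite (ord1 j); move: i; apply: forall_ord => k hk.
rewrite /d_cartan_D6lt !mxE z !inordK //.
case: k hk => [|[|[|[|[|[|[|k]]]]]]] hk; rewrite /=; lia.
Qed.

Lemma cartan_D6lt_kerT x : cartan_D6lt^T *m x = 0 -> d'_cartan_D6lt 0 0 *: x = x 0 0 *: d'_cartan_D6lt.
Proof.
move=> h; rewrite /cartan_D6lt /simply_laced in h.
getq h 7%N 0%N e0.
getq h 7%N 1%N e1.
getq h 7%N 2%N e2.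
getq h 7%N 3%N e3.
getq h 7%N 4%N e4.
getq h 7%N 5%N e5.
getq h 7%N 6%N e6.
have z : (0 : 'I_7) = inord 0 by apply: ord_inj; rewrite inordK.
apply/matrixP => i j; rewrite (ord1 j); move: i; apply: forall_ord => k hk.
rewrite /d'_cartan_D6lt !mxE z !inordK //.
case: k hk => [|[|[|[|[|[|[|k]]]]]]] hk; rewrite /=; lia.
Qed.

Lemma cartan_D6lt_adj : \adj cartan_D6lt 0 0 != 0.
Proof.
rewrite mxE /cofactor /= expr0 mul1r.
apply/negP => /eqP /det0_int [y ynz h].
rewrite /cartan_D6lt /simply_laced in h.
getqr h 6%N 0%N e0.
getqr h 6%N 1%N e1.
getqr h 6%N 2%N e2.
getqr h 6%N 3%N e3.
getqr h 6%N 4%N e4.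
getqr h 6%N 5%N e5.
apply: (negP ynz); apply/eqP/matrixP => i j; rewrite [i](_ : _ = ord0); last exact: ord1.
rewrite [RHS]mxE; move: j.
apply: forall_ord => k hk.
case: k hk => [|[|[|[|[|[|k]]]]]] hk; match goal with |- fun_of_matrix ?M ?i ?j = _ => change (@fun_of_matrix int _ _ M i j = 0 :> int) end; lia.
Qed.

Lemma cartan_D6lt_main (v w : 'cV[int]_7) :
  (forall i, v i 0 <= 0) ->
  (forall i, w i 0 <= 0) ->
  (forall i, (v i 0 == 0) = (w i 0 == 0)) ->
  \det (ext_matrix cartan_D6lt v w) = 0 ->
  v = 0 /\ w = 0.
Proof. exact: (@main_gen _ cartan_D6lt d_cartan_D6lt d'_cartan_D6lt v w cartan_D6lt_pos cartan_D6lt_pos' cartan_D6lt_d cartan_D6lt_ker cartan_D6lt_kerT cartan_D6lt_adj). Qed.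

Definition d_cartan_D6gt : 'cV[int]_7 := \col_(i < 7) (nth 0 [:: 1; 2; 2; 2; 2; 1; 1] i).
Definition d'_cartan_D6gt : 'cV[int]_7 := \col_(i < 7) (nth 0 [:: 2; 2; 2; 2; 2; 1; 1] i).

Lemma cartan_D6gt_pos : forall i, 0 < d_cartan_D6gt i 0.
Proof. apply: forall_ord => k hk; rewrite mxE inordK //; case: k hk => [|[|[|[|[|[|[|k]]]]]]] hk; by [] || lia. Qed.
Lemma cartan_D6gt_pos' : forall i, 0 < d'_cartan_D6gt i 0.
Proof. apply: forall_ord => k hk; rewrite mxE inordK //; case: k hk => [|[|[|[|[|[|[|k]]]]]]] hk; by [] || lia. Qed.

Lemma cartan_D6gt_d : cartan_D6gt *m d_cartan_D6gt = 0.
Proof.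
apply/matrixP => i j; rewrite (ord1 j); move: i; apply: forall_ord => k hk.
rewrite mul_col_nat [RHS]mxE /cartan_D6gt /simply_laced /d_cartan_D6gt.
case: k hk => [|[|[|[|[|[|[|k]]]]]]] hk; try (simp_goal; done); lia.
Qed.

Lemma cartan_D6gt_ker x : cartan_D6gt *m x = 0 -> d_cartan_D6gt 0 0 *: x = x 0 0 *: d_cartan_D6gt.
Proof.
move=> h; rewrite /cartan_D6gt /simply_laced in h.
getq h 7%N 0%N e0.
getq h 7%N 1%N e1.
getq h 7%N 2%N e2.
getq h 7%N 3%N e3.
getq h 7%N 4%N e4.
getq h 7%N 5%N e5.
getq h 7%N 6%N e6.
have z : (0 : 'I_7) = inord 0 by apply: ord_inj; rewrite inordK.
apply/matrixP => i j; rewrite (ord1 j); move: i; apply: forall_ord => k hk.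
rewrite /d_cartan_D6gt !mxE z !inordK //.
case: k hk => [|[|[|[|[|[|[|k]]]]]]] hk; rewrite /=; lia.
Qed.

Lemma cartan_D6gt_kerT x : cartan_D6gt^T *m x = 0 -> d'_cartan_D6gt 0 0 *: x = x 0 0 *: d'_cartan_D6gt.
Proof.
move=> h; rewrite /cartan_D6gt /simply_laced in h.
getq h 7%N 0%N e0.
getq h 7%N 1%N e1.
getq h 7%N 2%N e2.
getq h 7%N 3%N e3.
getq h 7%N 4%N e4.
getq h 7%N 5%N e5.
getq h 7%N 6%N e6.
have z : (0 : 'I_7) = inord 0 by apply: ord_inj; rewrite inordK.
apply/matrixP => i j; rewrite (ord1 j); move: i; apply: forall_ord => k hk.
rewrite /d'_cartan_D6gt !mxE z !inordK //.
case: k hk => [|[|[|[|[|[|[|k]]]]]]] hk; rewrite /=; lia.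
Qed.

Lemma cartan_D6gt_adj : \adj cartan_D6gt 0 0 != 0.
Proof.
rewrite mxE /cofactor /= expr0 mul1r.
apply/negP => /eqP /det0_int [y ynz h].
rewrite /cartan_D6gt /simply_laced in h.
getqr h 6%N 0%N e0.
getqr h 6%N 1%N e1.
getqr h 6%N 2%N e2.
getqr h 6%N 3%N e3.
getqr h 6%N 4%N e4.
getqr h 6%N 5%N e5.
apply: (negP ynz); apply/eqP/matrixP => i j; rewrite [i](_ : _ = ord0); last exact: ord1.
rewrite [RHS]mxE; move: j.
apply: forall_ord => k hk.
case: k hk => [|[|[|[|[|[|k]]]]]] hk; match goal with |- fun_of_matrix ?M ?i ?j = _ => change (@fun_of_matrix int _ _ M i j = 0 :> int) end; lia.
Qed.

Lemma cartan_D6gt_main (v w : 'cV[int]_7) :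
  (forall i, v i 0 <= 0) ->
  (forall i, w i 0 <= 0) ->
  (forall i, (v i 0 == 0) = (w i 0 == 0)) ->
  \det (ext_matrix cartan_D6gt v w) = 0 ->
  v = 0 /\ w = 0.
Proof. exact: (@main_gen _ cartan_D6gt d_cartan_D6gt d'_cartan_D6gt v w cartan_D6gt_pos cartan_D6gt_pos' cartan_D6gt_d cartan_D6gt_ker cartan_D6gt_kerT cartan_D6gt_adj). Qed.

Definition d_cartan_E8eq : 'cV[int]_9 := \col_(i < 9) (nth 0 [:: 1; 2; 3; 4; 5; 6; 4; 2; 3] i).
Definition d'_cartan_E8eq : 'cV[int]_9 := \col_(i < 9) (nth 0 [:: 1; 2; 3; 4; 5; 6; 4; 2; 3] i).

Lemma cartan_E8eq_pos : forall i, 0 < d_cartan_E8eq i 0.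
Proof. apply: forall_ord => k hk; rewrite mxE inordK //; case: k hk => [|[|[|[|[|[|[|[|[|k]]]]]]]]] hk; by [] || lia. Qed.
Lemma cartan_E8eq_pos' : forall i, 0 < d'_cartan_E8eq i 0.
Proof. apply: forall_ord => k hk; rewrite mxE inordK //; case: k hk => [|[|[|[|[|[|[|[|[|k]]]]]]]]] hk; by [] || lia. Qed.

Lemma cartan_E8eq_d : cartan_E8eq *m d_cartan_E8eq = 0.
Proof.
apply/matrixP => i j; rewrite (ord1 j); move: i; apply: forall_ord => k hk.
rewrite mul_col_nat [RHS]mxE /cartan_E8eq /simply_laced /d_cartan_E8eq.
case: k hk => [|[|[|[|[|[|[|[|[|k]]]]]]]]] hk; try (simp_goal; done); lia.
Qed.

Lemma cartan_E8eq_ker x : cartan_E8eq *m x = 0 -> d_cartan_E8eq 0 0 *: x = x 0 0 *: d_cartan_E8eq.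
Proof.
move=> h; rewrite /cartan_E8eq /simply_laced in h.
getq h 9%N 0%N e0.
getq h 9%N 1%N e1.
getq h 9%N 2%N e2.
getq h 9%N 3%N e3.
getq h 9%N 4%N e4.
getq h 9%N 5%N e5.
getq h 9%N 6%N e6.
getq h 9%N 7%N e7.
getq h 9%N 8%N e8.
have z : (0 : 'I_9) = inord 0 by apply: ord_inj; rewrite inordK.
apply/matrixP => i j; rewrite (ord1 j); move: i; apply: forall_ord => k hk.
rewrite /d_cartan_E8eq !mxE z !inordK //.
case: k hk => [|[|[|[|[|[|[|[|[|k]]]]]]]]] hk; rewrite /=; lia.
Qed.

Lemma cartan_E8eq_kerT x : cartan_E8eq^T *m x = 0 -> d'_cartan_E8eq 0 0 *: x = x 0 0 *: d'_cartan_E8eq.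
Proof.
move=> h; rewrite /cartan_E8eq /simply_laced in h.
getq h 9%N 0%N e0.
getq h 9%N 1%N e1.
getq h 9%N 2%N e2.
getq h 9%N 3%N e3.
getq h 9%N 4%N e4.
getq h 9%N 5%N e5.
getq h 9%N 6%N e6.
getq h 9%N 7%N e7.
getq h 9%N 8%N e8.
have z : (0 : 'I_9) = inord 0 by apply: ord_inj; rewrite inordK.
apply/matrixP => i j; rewrite (ord1 j); move: i; apply: forall_ord => k hk.
rewrite /d'_cartan_E8eq !mxE z !inordK //.
case: k hk => [|[|[|[|[|[|[|[|[|k]]]]]]]]] hk; rewrite /=; lia.
Qed.

Lemma cartan_E8eq_adj : \adj cartan_E8eq 0 0 != 0.
Proof.
rewrite mxE /cofactor /= expr0 mul1r.
apply/negP => /eqP /det0_int [y ynz h].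
rewrite /cartan_E8eq /simply_laced in h.
getqr h 8%N 0%N e0.
getqr h 8%N 1%N e1.
getqr h 8%N 2%N e2.
getqr h 8%N 3%N e3.
getqr h 8%N 4%N e4.
getqr h 8%N 5%N e5.
getqr h 8%N 6%N e6.
getqr h 8%N 7%N e7.
apply: (negP ynz); apply/eqP/matrixP => i j; rewrite [i](_ : _ = ord0); last exact: ord1.
rewrite [RHS]mxE; move: j.
apply: forall_ord => k hk.
case: k hk => [|[|[|[|[|[|[|[|k]]]]]]]] hk; match goal with |- fun_of_matrix ?M ?i ?j = _ => change (@fun_of_matrix int _ _ M i j = 0 :> int) end; lia.
Qed.

Lemma cartan_E8eq_main (v w : 'cV[int]_9) :
  (forall i, v i 0 <= 0) ->
  (forall i, w i 0 <= 0) ->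
  (forall i, (v i 0 == 0) = (w i 0 == 0)) ->
  \det (ext_matrix cartan_E8eq v w) = 0 ->
  v = 0 /\ w = 0.
Proof. exact: (@main_gen _ cartan_E8eq d_cartan_E8eq d'_cartan_E8eq v w cartan_E8eq_pos cartan_E8eq_pos' cartan_E8eq_d cartan_E8eq_ker cartan_E8eq_kerT cartan_E8eq_adj). Qed.

Theorem mainTheorem3 (t : affine_ext) (v w : 'cV[int]_(ext_dim t)) :
  (forall i, v i 0 <= 0) ->
  (forall i, w i 0 <= 0) ->
  (forall i, (v i 0 == 0) = (w i 0 == 0)) ->
  \det (ext_matrix (ext_cartan t) v w) = 0 ->
  v = 0 /\ w = 0.
Proof.
case: t v w => v w.
- exact: cartan_A4eq_main.
- exact: cartan_D6gt_main.
- exact: cartan_D6eq_main.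
- exact: cartan_D6lt_main.
- exact: cartan_E8eq_main.
Qed.
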